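(* Let $T$ be a strongly consistent $\mathcal{L}$-theory in $RGL^*$. Then $T$ is maximally strongly consistent if and only if (1) for all $\mathcal{L}$-sentences $\varphi,\psi$, either $\varphi\to\psi\in T$ or $\psi\to\varphi\in T$; and (2) whenever $\varphi$ is an $\mathcal{L}$-sentence with $T\vdash\bar r\to\varphi$ for all rationals $r\in(0,1]$, then $\varphi\in T$.
   Context: $\mathcal{L}$ is a first-order language with countably many predicate, function and constant symbols. Formulas of $RGL^*$ are built from atomic formulas and the nullary connectives $\bar r$ ($r\in[0,1]\cap\mathbb{Q}$, including $\bar0,\bar1$) by $\wedge,\to,\forall,\exists$; $\neg\varphi:=\varphi\to\bar1$, $\varphi\vee\psi:=((\varphi\to\psi)\to\psi)\wedge((\psi\to\varphi)\to\varphi)$, $\varphi\leftrightarrow\psi:=(\varphi\to\psi)\wedge(\psi\to\varphi)$. Proof system $\vdash$: all instances of (G1) $(\varphi\to\psi)\to((\psi\to\chi)\to(\varphi\to\chi))$; (G2) $(\varphi\wedge\psi)\to\varphi$; (G3) $(\varphi\wedge\psi)\to(\psi\wedge\varphi)$; (G4) $\varphi\to(\varphi\wedge\varphi)$; (G5) $(\varphi\to(\psi\to\chi))\leftrightarrow((\varphi\wedge\psi)\to\chi)$; (G6) $((\varphi\to\psi)\to\chi)\to(((\psi\to\varphi)\to\chi)\to\chi)$; (G7) $\bar1\to\varphi$; (G$\forall$1) $(\forall x\,\varphi(x))\to\varphi(t)$; (G$\forall$2) $\forall x(\psi\to\varphi(x))\to(\psi\to\forall x\,\varphi(x))$; (G$\forall$3)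 $\forall x(\psi\vee\varphi(x))\to(\psi\vee\forall x\,\varphi(x))$; (G$\exists$1) $\varphi(t)\to\exists x\,\varphi(x)$; (G$\exists$2) $\exists x(\psi\to\varphi(x))\to(\psi\to\exists x\,\varphi(x))$ (with $t$ substitutable for $x$ and $x$ not free in $\psi$); (RGL1) $(\bar r\wedge\bar s)\leftrightarrow\overline{\max\{r,s\}}$; (RGL2) $\bar r\to\bar s$ if $r\ge s$, $(\bar r\to\bar s)\leftrightarrow\bar s$ if $r<s$; (RGL3) $\neg\neg\bar r$ for $r<1$. Rules: modus ponens and generalization. A theory $T$ is strongly consistent if $T\nvdash\bar r$ for every rational $r\in(0,1]$; it is maximally strongly consistent if it is strongly consistent and every strongly consistent $\mathcal{L}$-theory $\Sigma\supseteq T$ equals $T$. *)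

(* Defs.v *)
From mathcomp Require Import all_boot all_order all_algebra.
Set Implicit Arguments. Unset Strict Implicit. Unset Printing Implicit Defensive.
Import Order.TTheory GRing.Theory Num.Theory.
Local Open Scope ring_scope.

(* A countable first-order language: countably many function symbols
   (constants = 0-ary function symbols) and predicate symbols, with arities. *)
Record signature := Signature {
  Fsym : countType;
  Psym : countType;
  far : Fsym -> nat;
  par : Psym -> nat }.

Definition qI := {r : rat | (0 <= r) && (r <= 1)}.
Definition qval (r : qI) : rat := sval r.

Section Syntax.
Variable L : signature.

Inductive lterm : Type :=
| var : nat -> lterm
| app : forall f : Fsym L, ('I_(far f) -> lterm) -> lterm.

Inductive formula : Type :=
| Atom : forall p : Psym L, ('I_(par p) -> lterm) -> formula
| Const : qI -> formula
| And : formula -> formula -> formula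
| Imp : formula -> formula -> formula
| All : formula -> formula                 (* binds de Bruijn index 0 *)
| Ex : formula -> formula.

Definition Neg (phi : formula) : formula := Imp phi (Const (exist _ 1 isT)).
Definition Or (phi psi : formula) : formula :=
  And (Imp (Imp phi psi) psi) (Imp (Imp psi phi) phi).
Definition Iff (phi psi : formula) : formula := And (Imp phi psi) (Imp psi phi).

Fixpoint ren_term (xi : nat -> nat) (t : lterm) : lterm :=
  match t with
  | var n => var (xi n)
  | app f a => app (fun i => ren_term xi (a i))
  end.

Fixpoint subst_term (sigma : nat -> lterm) (t : lterm) : lterm :=
  match t with
  | var n => sigma n
  | app f a => app (fun i => subst_term sigma (a i))
  end.

Definition upren (xi : nat -> nat) (n : nat) : nat :=
  match n with 0 => 0 | k.+1 => (xi k).+1 end.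

Definition up (sigma : nat -> lterm) (n : nat) : lterm :=
  match n with 0 => var 0 | k.+1 => ren_term succn (sigma k) end.

Fixpoint ren_form (xi : nat -> nat) (phi : formula) : formula :=
  match phi with
  | Atom p a => Atom (fun i => ren_term xi (a i))
  | Const r => Const r
  | And a b => And (ren_form xi a) (ren_form xi b)
  | Imp a b => Imp (ren_form xi a) (ren_form xi b)
  | All a => All (ren_form (upren xi) a)
  | Ex a => Ex (ren_form (upren xi) a)
  end.

Fixpoint subst_form (sigma : nat -> lterm) (phi : formula) : formula :=
  match phi with
  | Atom p a => Atom (fun i => subst_term sigma (a i))
  | Const r => Const r
  | And a b => And (subst_form sigma a) (subst_form sigma b)
  | Imp a b => Imp (subst_form sigma a) (subst_form sigma b)
  | All a => All (subst_form (up sigma) a)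
  | Ex a => Ex (subst_form (up sigma) a)
  end.

(* phi(t): substitute t for the variable bound by the outer quantifier *)
Definition inst (t : lterm) (n : nat) : lterm :=
  match n with 0 => t | k.+1 => var k end.
Definition instantiate (phi : formula) (t : lterm) : formula := subst_form (inst t) phi.

(* lifting psi under a binder: expresses "x not free in psi" *)
Definition lift (psi : formula) : formula := ren_form succn psi.

Fixpoint term_bound (n : nat) (t : lterm) : Prop :=
  match t with
  | var k => (k < n)%N
  | app f a => forall i, term_bound n (a i)
  end.

Fixpoint form_bound (n : nat) (phi : formula) : Prop :=
  match phi with
  | Atom p a => forall i, term_bound n (a i)
  | Const _ => True
  | And a b => form_bound n a /\ form_bound n b
  | Imp a b => form_bound n a /\ form_bound n b
  | All a => form_bound n.+1 a
  | Ex a => form_bound n.+1 a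
  end.

Definition sentence (phi : formula) : Prop := form_bound 0 phi.

Definition is_theory (T : formula -> Prop) : Prop := forall phi, T phi -> sentence phi.

Inductive axiom : formula -> Prop :=
| G1 a b c : axiom (Imp (Imp a b) (Imp (Imp b c) (Imp a c)))
| G2 a b : axiom (Imp (And a b) a)
| G3 a b : axiom (Imp (And a b) (And b a))
| G4 a : axiom (Imp a (And a a))
| G5 a b c : axiom (Iff (Imp a (Imp b c)) (Imp (And a b) c))
| G6 a b c : axiom (Imp (Imp (Imp a b) c) (Imp (Imp (Imp b a) c) c))
| G7 a : axiom (Imp (Const (exist _ 1 isT)) a)
| GAll1 phi t : axiom (Imp (All phi) (instantiate phi t))
| GAll2 psi phi : axiom (Imp (All (Imp (lift psi) phi)) (Imp psi (All phi)))
| GAll3 psi phi : axiom (Imp (All (Or (lift psi) phi)) (Or psi (All phi)))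
| GEx1 phi t : axiom (Imp (instantiate phi t) (Ex phi))
| GEx2 psi phi : axiom (Imp (Ex (Imp (lift psi) phi)) (Imp psi (Ex phi)))
| RGL1 (r s m : qI) : qval m = Num.max (qval r) (qval s) ->
    axiom (Iff (And (Const r) (Const s)) (Const m))
| RGL2a (r s : qI) : qval s <= qval r -> axiom (Imp (Const r) (Const s))
| RGL2b (r s : qI) : qval r < qval s ->
    axiom (Iff (Imp (Const r) (Const s)) (Const s))
| RGL3 (r : qI) : qval r < 1 -> axiom (Neg (Neg (Const r))).

Inductive prv (T : formula -> Prop) : formula -> Prop :=
| prv_ax phi : axiom phi -> prv T phi
| prv_hyp phi : T phi -> prv T phi
| prv_mp phi psi : prv T phi -> prv T (Imp phi psi) -> prv T psi
| prv_gen phi : prv T phi -> prv T (All phi).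

Definition strongly_consistent (T : formula -> Prop) : Prop :=
  forall r : qI, 0 < qval r -> ~ prv T (Const r).

Definition maximally_strongly_consistent (T : formula -> Prop) : Prop :=
  strongly_consistent T /\
  forall Sg : formula -> Prop, is_theory Sg -> (forall phi, T phi -> Sg phi) ->
    strongly_consistent Sg -> forall phi, Sg phi <-> T phi.

End Syntax.

(* Main.v *)
Require Import Defs.
From Stdlib Require Import Classical FunctionalExtensionality.
From mathcomp Require Import all_boot all_order all_algebra.
From mathcomp Require Import lra.
Import Order.TTheory GRing.Theory Num.Theory.
Local Open Scope ring_scope.

Lemma ren_term_id (L : signature) (t : lterm L) : forall n (xi : nat -> nat),
  term_bound n t -> (forall k, (k < n)%N -> xi k = k) -> ren_term xi t = t.
Proof.
induction t as [k|f a IH] => n xi hb hxi /=.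
- by rewrite hxi.
- f_equal; apply: functional_extensionality => i; exact: IH.
Qed.

Lemma ren_form_id (L : signature) (phi : formula L) : forall n (xi : nat -> nat),
  form_bound n phi -> (forall k, (k < n)%N -> xi k = k) -> ren_form xi phi = phi.
Proof.
induction phi as [p a|r|a IHa b IHb|a IHa b IHb|a IHa|a IHa] => n xi hb hxi /=.
- f_equal; apply: functional_extensionality => i; exact: ren_term_id (hb i) hxi.
- by [].
- by case: hb => h1 h2; rewrite (IHa n) // (IHb n).
- by case: hb => h1 h2; rewrite (IHa n) // (IHb n).
- rewrite (IHa n.+1) //; case=> [|k] //= hk; by rewrite hxi.
- rewrite (IHa n.+1) //; case=> [|k] //= hk; by rewrite hxi.
Qed.

Lemma lift_sentence {L : signature} {phi : formula L} : sentence phi -> Defs.lift phi = phi.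
Proof. move=> h; exact: (@ren_form_id L phi 0 succn h). Qed.

Lemma mp' {L : signature} {T : formula L -> Prop} {a b} :
  prv T (Imp a b) -> prv T a -> prv T b.
Proof. move=> h1 h2; exact: prv_mp h2 h1. Qed.

Lemma trans' {L : signature} {T : formula L -> Prop} {a b c} :
  prv T (Imp a b) -> prv T (Imp b c) -> prv T (Imp a c).
Proof. move=> h1 h2; apply: mp' h2; apply: mp' h1; apply: prv_ax; exact: G1. Qed.

Lemma iff1 {L : signature} {T : formula L -> Prop} {a b} :
  prv T (Iff a b) -> prv T (Imp a b).
Proof. move=> h; apply: mp' h; apply: prv_ax; exact: G2. Qed.

Lemma iff2 {L : signature} {T : formula L -> Prop} {a b} :
  prv T (Iff a b) -> prv T (Imp b a).
Proof.
move=> h; have h' : prv T (And (Imp b a) (Imp a b)).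
  by apply: mp' h; apply: prv_ax; exact: G3.
apply: mp' h'; apply: prv_ax; exact: G2.
Qed.

Lemma curry' {L : signature} {T : formula L -> Prop} {a b c} :
  prv T (Imp (And a b) c) -> prv T (Imp a (Imp b c)).
Proof. move=> h; apply: mp' h; apply: iff2; apply: prv_ax; exact: G5. Qed.

Lemma uncurry' {L : signature} {T : formula L -> Prop} {a b c} :
  prv T (Imp a (Imp b c)) -> prv T (Imp (And a b) c).
Proof. move=> h; apply: mp' h; apply: iff1; apply: prv_ax; exact: G5. Qed.

Lemma weak' {L : signature} {T : formula L -> Prop} {a b} :
  prv T a -> prv T (Imp b a).
Proof.
move=> h; apply: mp' h; apply: curry'; apply: prv_ax; exact: G2.
Qed.

Lemma refl' {L : signature} {T : formula L -> Prop} {a} : prv T (Imp a a).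
Proof. apply: (@trans' _ _ _ (And a a)); apply: prv_ax; [exact: G4|exact: G2]. Qed.

Lemma exch' {L : signature} {T : formula L -> Prop} {a b c} :
  prv T (Imp a (Imp b c)) -> prv T (Imp b (Imp a c)).
Proof.
move=> h; apply: curry'; apply: (@trans' _ _ _ (And a b)).
  apply: prv_ax; exact: G3.
exact: uncurry'.
Qed.

Lemma contr' {L : signature} {T : formula L -> Prop} {a c} :
  prv T (Imp a (Imp a c)) -> prv T (Imp a c).
Proof.
move=> h; apply: (@trans' _ _ _ (And a a)); first by apply: prv_ax; exact: G4.
exact: uncurry'.
Qed.

Lemma mpI {L : signature} {T : formula L -> Prop} {x a b} :
  prv T (Imp x a) -> prv T (Imp x (Imp a b)) -> prv T (Imp x b).
Proof.
move=> h1 h2; apply: contr'; exact: (trans' h1 (exch' h2)).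
Qed.

Lemma deduction {L : signature} {T : formula L -> Prop} {chi th} :
  sentence chi -> prv (fun x => T x \/ x = chi) th -> prv T (Imp chi th).
Proof.
move=> hs; elim=> {th}.
- move=> p hp; apply: weak'; exact: prv_ax.
- move=> p [hp|->]; [apply: weak'; exact: prv_hyp | exact: refl'].
- move=> p q _ h1 _ h2; exact: mpI h1 h2.
- move=> p _ h; have g := prv_gen h.
  apply: mp' g; rewrite -{1}(lift_sentence hs); apply: prv_ax; exact: GAll2.
Qed.

Theorem mainTheorem7 (L : signature) (T : formula L -> Prop) :
  is_theory T -> strongly_consistent T ->
  (maximally_strongly_consistent T <->
   ((forall phi psi : formula L, sentence phi -> sentence psi ->
       T (Imp phi psi) \/ T (Imp psi phi)) /\
    (forall phi : formula L, sentence phi ->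
       (forall r : qI, 0 < qval r -> prv T (Imp (Const L r) phi)) -> T phi))).
Proof.
move=> hth hsc; split.
- case=> _ hmax.
  have addT : forall chi, sentence chi ->
      strongly_consistent (fun x => T x \/ x = chi) -> T chi.
  { move=> chi hs hsc'; apply: (proj1 (hmax _ _ _ hsc' chi)).
    - by move=> x [hx|->] //; exact: hth.
    - by move=> x hx; left.
    - by right. }
  split.
  + move=> phi psi hp hq.
    case: (classic (T (Imp phi psi))) => [h|n1]; first by left.
    case: (classic (T (Imp psi phi))) => [h|n2]; first by right.
    exfalso.
    apply: n1; apply: (addT); first by split.
    move=> r hr pr.
    apply: n2; apply: (addT); first by split.
    move=> s hs ps.
    have d1 := deduction (conj hp hq : sentence (Imp phi psi)) pr.
    have d2 := deduction (conj hq hp : sentence (Imp psi phi)) ps.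
    have key : forall m : qI, 0 < qval m ->
        prv T (Imp (Imp phi psi) (Const L m)) ->
        prv T (Imp (Imp psi phi) (Const L m)) -> False.
      move=> m hm e1 e2; apply: (hsc m hm).
      apply: mp' e2; apply: mp' e1; apply: prv_ax; exact: G6.
    case: (lerP (qval r) (qval s)) => hrs.
    * exact: (key r hr d1 (trans' d2 (prv_ax _ (@RGL2a L _ _ hrs)))).
    * exact: (key s hs (trans' d1 (prv_ax _ (@RGL2a L _ _ (ltW hrs)))) d2).
  + move=> phi hp hall; apply: (addT) => // s hs ps.
    have d := deduction hp ps.
    have h01 : (0 <= qval s / 2) && (qval s / 2 <= 1).
      case/andP: (svalP s) => h0 h1; rewrite /qval in hs *.
      apply/andP; split; lra.
    pose h : qI := exist _ (qval s / 2) h01.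
    have hh : 0 < qval h by rewrite /h /qval /=; rewrite /qval in hs; lra.
    have hl : qval h < qval s by rewrite /h /qval /=; rewrite /qval in hs; lra.
    apply: (hsc s hs); apply: mp' (trans' (hall h hh) d).
    apply: iff1; apply: prv_ax; exact: RGL2b.
- case=> h1 h2; split => // Sg hSg hsub hscS phi; split; last exact: hsub.
  move=> hphi; apply: h2; first exact: hSg.
  move=> r hr.
  case: (h1 (Const L r) phi I (hSg _ hphi)) => hT; first exact: prv_hyp.
  exfalso; apply: (hscS r hr).
  eapply prv_mp; apply prv_hyp; [exact hphi | exact (hsub _ hT)].
Qed.
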